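(* Let $H=(V,E)$ be an undirected graph, $s,t\in V$, and $\ell$ a positive integer. Then $\lambda_{H\setminus C}(s,t)\ge 2(\ell-|C|)$ holds for every $C\subseteq V\setminus\{s,t\}$ with $|C|<\ell$ if and only if $H$ contains $2\ell$ pairwise edge-disjoint $st$-paths such that every node $v\in V\setminus\{s,t\}$ belongs to at most $2$ of them.
   Context: $\lambda_{F}(s,t)$ denotes the maximum number of pairwise edge-disjoint $st$-paths in a graph $F$; $H\setminus C$ is the graph obtained from $H$ by deleting the nodes of $C$ (and their incident edges). *)

(* Defs.v *)
(* Finite undirected multigraphs: node type V, edge type E,
   and an endpoint map ends : E -> V * V (edge e joins (ends e).1, (ends e).2;
   the orientation of the pair is irrelevant). *)
From mathcomp Require Import all_boot.
Unset Strict Implicit. Unset Printing Implicit Defensive.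

Section Graphs.
Variables (V E : finType) (ends : E -> V * V).

Definition joins (e : E) (x y : V) : bool :=
  (ends e == (x, y)) || (ends e == (y, x)).

Definition is_st_path (s t : V) (vs : seq V) (es : seq E) : Prop :=
  [/\ size vs = (size es).+1, uniq vs, head t vs = s, last s vs = t &
      all (fun p => joins p.1 p.2.1 p.2.2) (zip es (zip vs (behead vs)))].

(* P is a family of k pairwise edge-disjoint s-t paths of the graph H \ C
   (i.e. s-t paths of H none of whose nodes lies in C). *)
Definition edp_family (s t : V) (C : {set V}) (k : nat)
    (P : 'I_k -> seq V * seq E) : Prop :=
  (forall i, is_st_path s t (P i).1 (P i).2 /\ all (fun v => v \notin C) (P i).1) /\
  (forall i j : 'I_k, i != j -> forall e, e \in (P i).2 -> e \notin (P j).2).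

(* lambda_{H \ C}(s,t) >= k : there are k pairwise edge-disjoint s-t paths in H \ C
   (lambda is the maximum such number). *)
Definition lambda_ge (C : {set V}) (s t : V) (k : nat) : Prop :=
  exists P : 'I_k -> seq V * seq E, edp_family s t C k P.

End Graphs.

Arguments joins {V E} ends e x y.
Arguments is_st_path {V E} ends s t vs es.
Arguments edp_family {V E} ends s t C k P.
Arguments lambda_ge {V E} ends C s t k.

(* Main.v *)
Require Import Defs.
From mathcomp Require Import all_boot zify.
Set Implicit Arguments. Unset Strict Implicit. Unset Printing Implicit Defensive.

Section Walk.
Variables (N S : finType) (hd tl : S -> N).

Definition walk (x y : N) (ws : seq S) :=
  [/\ map tl ws = belast x (map hd ws), last x (map hd ws) = y & uniq (x :: map hd ws)].

Lemma walk_inv (Q : N -> Prop) x y ws : walk x y ws -> Q x ->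
  (forall z, z \in ws -> Q (tl z) -> Q (hd z)) -> Q y.
Proof.
case=> + <- _; elim: ws x => [|z ws IH] x //= [Ht Hb] Qx H.
apply: IH; first exact: Hb.
- by apply: H; rewrite ?inE ?eqxx // Ht.
- by move=> w wi; apply: H; rewrite inE wi orbT.
Qed.

Lemma connect_walk (ok : pred S) x y :
  connect (fun u w => [exists z, [&& ok z, tl z == u & hd z == w]]) x y ->
  exists ws, walk x y ws /\ all ok ws.
Proof.
move/connectP=> [p Hp ->]; case/shortenP: Hp => q Hq Uq _.
suff [ws [H1 H2 H3]] : exists ws, [/\ map hd ws = q, map tl ws = belast x q & all ok ws].
  by exists ws; split=> //; split; rewrite H1.
elim: q x Hq {Uq} => [|w q IH] x /=; first by exists [::].
case/andP=> /existsP[z /and3P[okz /eqP tz /eqP hz]] /IH[ws [H1 H2 H3]].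
by exists (z :: ws); rewrite /= H1 H2 tz hz okz H3.
Qed.

Lemma walk_nonnil x y ws : walk x y ws -> x != y -> ws != [::].
Proof. by case: ws => // [[_ /= -> _]]; rewrite eqxx. Qed.

Lemma walk_uniq x y ws : walk x y ws -> uniq ws.
Proof. by case=> _ _ /= /andP[_ /map_uniq]. Qed.

Lemma walk_count_hd x y ws v : walk x y ws ->
  count (fun z => hd z == v) ws = (v \in map hd ws).
Proof.
case=> _ _ /= /andP[_ U].
rewrite -count_uniq_mem // count_map; apply: eq_count => z /=; by rewrite eq_sym.
Qed.

Lemma walk_count_tl x y ws v : walk x y ws ->
  count (fun z => tl z == v) ws = (v \in belast x (map hd ws)).
Proof.
case=> Ht _ U.
have Ub : uniq (belast x (map hd ws)).
  by move: U; rewrite lastI rcons_uniq => /andP[].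
rewrite -count_uniq_mem // -Ht count_map; apply: eq_count => z /=; by rewrite eq_sym.
Qed.

Lemma walk_mem_belast x y ws v : walk x y ws -> v != y ->
  (v \in belast x (map hd ws)) = (v \in x :: map hd ws).
Proof.
case=> _ Hl U Hv; rewrite lastI mem_rcons inE Hl (negbTE Hv) //.
Qed.

End Walk.
Set Implicit Arguments. Unset Strict Implicit. Unset Printing Implicit Defensive.

Lemma count_sum_uniq (T : finType) (P : pred T) (ws : seq T) : uniq ws ->
  count P ws = \sum_(z | P z) (z \in ws).
Proof.
move=> U; rewrite -sum1_count big_mkcond big_uniq // [RHS]big_mkcond [LHS]big_mkcond.
by apply: eq_bigr => z _; case: (P z); case: (z \in ws).
Qed.

Section Flow.
Variables (N A : finType) (src dst : A -> N) (s0 t0 : N).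

Definition sumF (F : {set A}) (f : A -> N) v := \sum_(a | f a == v) (a \in F).

Definition flow (F : {set A}) k :=
  (forall v, v != s0 -> v != t0 -> sumF F dst v = sumF F src v) /\
  sumF F src s0 = sumF F dst s0 + k.

Lemma sum_part (F : {set A}) (f : A -> N) (R : {set N}) :
  \sum_(a | f a \in R) (a \in F) = \sum_(v in R) sumF F f v.
Proof.
rewrite (partition_big f (fun v => v \in R)) //=; apply: eq_bigr => v vR.
by apply: eq_bigl => a; case: eqP => [->|]; rewrite ?vR ?andbF.
Qed.

Lemma cut_count F k (R : {set N}) : flow F k -> s0 \in R -> t0 \notin R ->
  \sum_(a | src a \in R) (a \in F) = \sum_(a | dst a \in R) (a \in F) + k.
Proof.
case=> Hc Hs sR tR; rewrite !sum_part (bigD1 s0) //= [X in _ = X + _](bigD1 s0) //=.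
rewrite (eq_bigr (fun v => sumF F dst v)); first by rewrite Hs addnAC.
move=> v /andP[vR vs]; rewrite Hc //; apply: contraNneq tR => <-; done.
Qed.

Definition avoid (X : {set A}) : rel N :=
  fun u w => [exists a, [&& a \notin X, src a == u & dst a == w]].

Lemma connect_closed (r : rel N) (Q : pred N) x y :
  (forall u w, Q u -> r u w -> Q w) -> Q x -> connect r x y -> Q y.
Proof.
move=> H Qx /connectP[p Hp ->]; elim: p x Qx Hp => //= w p IH x Qx /andP[r1 r2].
exact: IH (H _ _ Qx r1) r2.
Qed.

Definition hdS (z : A * bool) := if z.2 then dst z.1 else src z.1.
Definition tlS (z : A * bool) := if z.2 then src z.1 else dst z.1.
Definition okS (F : {set A}) (z : A * bool) := if z.2 then z.1 \notin F else z.1 \in F.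

Lemma step_count (ws : seq (A * bool)) (P : pred N) :
  uniq ws ->
  count (fun z => P (hdS z)) ws =
  \sum_(a | P (dst a)) ((a, true) \in ws) + \sum_(a | P (src a)) ((a, false) \in ws).
Proof.
move=> U; rewrite count_sum_uniq // big_mkcond /=.
rewrite (eq_bigr (fun z => (fun a b => if P (hdS (a, b)) then nat_of_bool ((a, b) \in ws) else 0) z.1 z.2)); last by case.
rewrite -(pair_bigA _ (fun a b => if P (hdS (a, b)) then nat_of_bool ((a, b) \in ws) else 0)) /=.
rewrite (big_mkcond (fun a => P (dst a))) (big_mkcond (fun a => P (src a))) -big_split /=.
by apply: eq_bigr => a _; rewrite big_bool.
Qed.

Lemma step_count_tl (ws : seq (A * bool)) (P : pred N) :
  uniq ws ->
  count (fun z => P (tlS z)) ws =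
  \sum_(a | P (src a)) ((a, true) \in ws) + \sum_(a | P (dst a)) ((a, false) \in ws).
Proof.
move=> U; rewrite count_sum_uniq // big_mkcond /=.
rewrite (eq_bigr (fun z => (fun a b => if P (tlS (a, b)) then nat_of_bool ((a, b) \in ws) else 0) z.1 z.2)); last by case.
rewrite -(pair_bigA _ (fun a b => if P (tlS (a, b)) then nat_of_bool ((a, b) \in ws) else 0)) /=.
rewrite (big_mkcond (fun a => P (src a))) (big_mkcond (fun a => P (dst a))) -big_split /=.
by apply: eq_bigr => a _; rewrite big_bool.
Qed.

End Flow.
Set Implicit Arguments. Unset Strict Implicit. Unset Printing Implicit Defensive.

Section Aug.
Variables (N A : finType) (src dst : A -> N) (s0 t0 : N).
Hypothesis st : s0 != t0.

Notation hdS := (hdS src dst).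
Notation tlS := (tlS src dst).
Notation sumF := (sumF (N:=N)).

Lemma sumF_ind (F G H K : {set A}) f v :
  (forall a, (a \in F) + (a \in G) = (a \in H) + (a \in K)) ->
  sumF F f v + sumF G f v = sumF H f v + sumF K f v.
Proof. by move=> E; rewrite /sumF -!big_split /=; apply: eq_bigr => a _; rewrite E. Qed.

Lemma augment F k ws : flow src dst s0 t0 F k -> walk hdS tlS s0 t0 ws -> all (okS F) ws ->
  flow src dst s0 t0 ((F :\: [set a | (a, false) \in ws]) :|: [set a | (a, true) \in ws]) k.+1.
Proof.
move=> [Hc Hs] W /allP Ok.
set Bk := [set a | (a, false) \in ws]; set Fw := [set a | (a, true) \in ws].
set F' := _ :|: _.
have E f v : sumF F' f v + sumF Bk f v = sumF F f v + sumF Fw f v.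
  apply: sumF_ind => a; rewrite !inE.
  case Ht: ((a, true) \in ws); case Hf: ((a, false) \in ws) => //=.
  - by have := Ok _ Ht; have := Ok _ Hf; rewrite /okS /= => ->.
  - by have := Ok _ Ht; rewrite /okS /= => /negbTE ->.
  - by have := Ok _ Hf; rewrite /okS /= => ->.
  - by rewrite orbF addn0.
have U := walk_uniq W.
have Ent v : sumF Fw dst v + sumF Bk src v = (v \in map hdS ws).
  rewrite -(walk_count_hd v W) (step_count src dst (pred1 v) U).
  by rewrite /sumF; congr (_ + _); apply: eq_bigr => a _; rewrite inE.
have Lea v : sumF Fw src v + sumF Bk dst v = (v \in belast s0 (map hdS ws)).
  rewrite -(walk_count_tl v W) (step_count_tl src dst (pred1 v) U).
  by rewrite /sumF; congr (_ + _); apply: eq_bigr => a _; rewrite inE.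
have Eb v : v != t0 -> (v \in belast s0 (map hdS ws)) = (v \in s0 :: map hdS ws).
  exact: walk_mem_belast W.
split.
- move=> v vs vt; have := Ent v; have := Lea v; rewrite Eb // inE (negbTE vs) /=.
  have := E dst v; have := E src v; have := Hc v vs vt; lia.
- have s0n : s0 \notin map hdS ws by case: W => _ _ /= /andP[].
  have := Ent s0; have := Lea s0; rewrite Eb // inE eqxx (negbTE s0n) /=.
  have := E dst s0; have := E src s0; lia.
Qed.

Lemma decomp_step F k ws : flow src dst s0 t0 F k.+1 -> walk dst src s0 t0 ws ->
  all (fun a => a \in F) ws -> flow src dst s0 t0 (F :\: [set a | a \in ws]) k.
Proof.
move=> [Hc Hs] W /allP Ok.
set P := [set a | a \in ws].
have E f v : sumF (F :\: P) f v + sumF P f v = sumF F f v + sumF set0 f v.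
  apply: sumF_ind => a; rewrite !inE.
  by case Ha: (a \in ws) => //=; rewrite (Ok _ Ha).
have Z f v : sumF set0 f v = 0 by rewrite /sumF big1 // => a _; rewrite inE.
have U := walk_uniq W.
have Ent v : sumF P dst v = (v \in map dst ws).
  rewrite -(walk_count_hd v W) (count_sum_uniq _ U) /sumF.
  by apply: eq_bigr => a _; rewrite inE.
have Lea v : sumF P src v = (v \in belast s0 (map dst ws)).
  rewrite -(walk_count_tl v W) (count_sum_uniq _ U) /sumF.
  by apply: eq_bigr => a _; rewrite inE.
have Eb v : v != t0 -> (v \in belast s0 (map dst ws)) = (v \in s0 :: map dst ws).
  exact: walk_mem_belast W.
split.
- move=> v vs vt; have := Ent v; have := Lea v; rewrite Eb // inE (negbTE vs) /=.
  have := E dst v; have := E src v; have := Hc v vs vt; rewrite !Z; lia.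
- have s0n : s0 \notin map dst ws by case: W => _ _ /= /andP[].
  have := Ent s0; have := Lea s0; rewrite Eb // inE eqxx (negbTE s0n) /=.
  have := E dst s0; have := E src s0; rewrite !Z; lia.
Qed.

End Aug.
Set Implicit Arguments. Unset Strict Implicit. Unset Printing Implicit Defensive.

Section MaxFlow.
Variables (N A : finType) (src dst : A -> N) (s0 t0 : N).
Hypothesis st : s0 != t0.

Lemma sum_ind_card (X : {set A}) : \sum_a (a \in X) = #|X|.
Proof. rewrite -sum1_card [RHS]big_mkcond /=. apply: eq_bigr => a _; by case: (a \in X). Qed.

Lemma maxflow K : (forall X : {set A}, #|X| < K -> connect (avoid src dst X) s0 t0) ->
  exists F, flow src dst s0 t0 F K.
Proof.
move=> Hyp.
suff H : forall k, k <= K -> exists F, flow src dst s0 t0 F k by exact: H.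
elim=> [|k IH] Hk.
  exists set0; split; rewrite /sumF.
  - by move=> v _ _; rewrite !big1 // => a _; rewrite inE.
  - by rewrite !big1 // => a _; rewrite inE.
have [F HF] := IH (ltnW Hk).
pose r := fun u w => [exists z, [&& okS F z, tlS src dst z == u & hdS src dst z == w]].
case Hr: (connect r s0 t0).
  have [ws [W Ok]] := connect_walk Hr.
  by eexists; exact: (augment st HF W Ok).
exfalso.
set R := [set v | connect r s0 v].
have sR : s0 \in R by rewrite inE connect0.
have tR : t0 \notin R by rewrite inE Hr.
set X := [set a | (src a \in R) && (dst a \notin R)].
have fw a : src a \in R -> a \notin F -> dst a \in R.
  rewrite !inE => H aF; apply: connect_trans H (connect1 _).
  by apply/existsP; exists (a, true); rewrite /okS /tlS /hdS /= aF !eqxx.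
have bw a : dst a \in R -> a \in F -> src a \in R.
  rewrite !inE => H aF; apply: connect_trans H (connect1 _).
  by apply/existsP; exists (a, false); rewrite /okS /tlS /hdS /= aF !eqxx.
have HX : K <= #|X|.
  rewrite leqNgt; apply/negP => /Hyp C.
  have : t0 \in R; last by rewrite (negbTE tR).
  apply: (connect_closed (Q := fun v => v \in R)) C => // u w uR /existsP[a /and3P[aX /eqP su /eqP dw]].
  by move: uR aX; rewrite -su -dw !inE => ->; rewrite /= negbK.
have Cc := cut_count HF sR tR.
have E1 : \sum_(a | src a \in R) (a \in F) =
          \sum_a ((src a \in R) && (dst a \in R) && (a \in F)) + \sum_a (a \in X).
  rewrite big_mkcond -big_split /=; apply: eq_bigr => a _; rewrite [a \in X]inE.
  by move: (fw a) (bw a); case: (src a \in R); case: (dst a \in R); case: (a \in F) => //= H1 H2; rewrite ?addn0 //; first [by have := H1 isT isT | by have := H2 isT isT].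
have E2 : \sum_(a | dst a \in R) (a \in F) =
          \sum_a ((src a \in R) && (dst a \in R) && (a \in F)).
  rewrite big_mkcond /=; apply: eq_bigr => a _.
  by move: (fw a) (bw a); case: (src a \in R); case: (dst a \in R); case: (a \in F) => //= H1 H2; first [by have := H1 isT isT | by have := H2 isT isT].
move: Cc; rewrite E1 E2 sum_ind_card => Cc.
have := addnI Cc.
lia.
Qed.

End MaxFlow.

Section Decomp.
Variables (N A : finType) (src dst : A -> N) (s0 t0 : N).
Hypothesis st : s0 != t0.

Lemma decomp k F : flow src dst s0 t0 F k ->
  exists Ws : seq (seq A), [/\ size Ws = k,
     forall W, W \in Ws -> walk dst src s0 t0 W /\ all (fun a => a \in F) W &
     forall a, count (fun W => a \in W) Ws <= 1].
Proof.
elim: k F => [|k IH] F HF.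
  by exists [::].
pose r := fun u w => [exists a, [&& a \in F, src a == u & dst a == w]].
have Hr : connect r s0 t0.
  apply/negPn/negP => Hr.
  set R := [set v | connect r s0 v].
  have sR : s0 \in R by rewrite inE connect0.
  have tR : t0 \notin R by rewrite inE (negbTE Hr).
  have fw a : src a \in R -> a \in F -> dst a \in R.
    rewrite !inE => H aF; apply: connect_trans H (connect1 _).
    by apply/existsP; exists a; rewrite aF !eqxx.
  have Cc := cut_count HF sR tR.
  have : \sum_(a | src a \in R) (a \in F) <= \sum_(a | dst a \in R) (a \in F).
    rewrite [X in X <= _]big_mkcond [X in _ <= X]big_mkcond /=; apply: leq_sum => a _.
    case sa: (src a \in R) => //; case aF: (a \in F) => //.
    by rewrite (fw a sa aF).
  rewrite Cc; lia.
have [ws [W Ok]] := connect_walk (hd := dst) (tl := src) Hr.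
have [Ws [H1 H2 H4]] := IH _ (decomp_step st HF W Ok).
exists (ws :: Ws); split => /=.
- by rewrite H1.
- move=> V; rewrite inE => /orP[/eqP -> //|VW].
  have [HV1 HV2] := H2 V VW; split => //; apply/allP => a aV.
  by have := allP HV2 a aV; rewrite !inE => /andP[].
- move=> a; case aw: (a \in ws) => /=; last exact: H4.
  have : ~~ has (fun W => a \in W) Ws.
    apply/hasPn => V VW; apply/negP => aV.
    by have := allP (H2 V VW).2 a aV; rewrite !inE aw.
  by rewrite has_count -leqNgt leqn0 => /eqP ->.
Qed.

End Decomp.
Set Implicit Arguments. Unset Strict Implicit. Unset Printing Implicit Defensive.

Section Graph.
Variables (V E : finType) (ends : E -> V * V) (s t : V).

Definition tlH (z : E * bool) := if z.2 then (ends z.1).1 else (ends z.1).2.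
Definition hdH (z : E * bool) := if z.2 then (ends z.1).2 else (ends z.1).1.

Lemma joins_step z : joins ends z.1 (tlH z) (hdH z).
Proof. by case: z => e [] /=; rewrite /joins /tlH /hdH /= -surjective_pairing eqxx ?orbT. Qed.

Lemma zip_all x ws : map tlH ws = belast x (map hdH ws) ->
  all (fun p => joins ends p.1 p.2.1 p.2.2) (zip (map fst ws) (zip (x :: map hdH ws) (map hdH ws))).
Proof.
elim: ws x => [|z ws IH] x //= [<- H]; rewrite joins_step /=; exact: IH.
Qed.

Lemma walk_st_path ws : walk hdH tlH s t ws ->
  is_st_path ends s t (s :: map hdH ws) (map fst ws).
Proof.
move=> W; have [H1 H2 H3] := W; split => //.
- by rewrite /= !size_map.
- exact: zip_all.
Qed.

Lemma zip_path (es0 : seq E) x p es : size p = size es ->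
  all (fun p => joins ends p.1 p.2.1 p.2.2) (zip es (zip (x :: p) p)) -> {subset es <= es0} ->
  path (fun x y => [exists e, (e \in es0) && joins ends e x y]) x p.
Proof.
elim: p x es => [|y p IH] x [|e es] //= [Hs] /andP[J Hz] Hin.
rewrite (IH y es Hs Hz) ?andbT.
  by apply/existsP; exists e; rewrite J Hin // inE eqxx.
by move=> f fi; apply: Hin; rewrite inE fi orbT.
Qed.

Lemma st_path_rel vs es : is_st_path ends s t vs es ->
  exists p, vs = s :: p /\ path (fun x y => [exists e, (e \in es) && joins ends e x y]) s p.
Proof.
case; case: vs => [|x p] //= [Hs] _ <- _ Hz; exists p; split => //.
exact: zip_path Hs Hz _.
Qed.

Lemma path_strengthen (r : rel V) (Pp : pred V) x p : path r x p -> uniq (x :: p) ->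
  last x p = t -> all Pp p -> path (fun a b => [&& a != t, r a b & Pp b]) x p.
Proof.
elim: p x => [|y p IH] x //= /andP[r1 r2] /andP[xn U] L /andP[Py Pp'].
rewrite r1 Py IH // !andbT.
have tin : t \in y :: p by rewrite -L mem_last.
by apply/eqP => xt; move: xn; rewrite xt tin.
Qed.

Lemma path_closed (r : rel V) (Q : V -> Prop) x p :
  (forall a b, Q a -> r a b -> Q b) -> Q x -> path r x p -> Q (last x p).
Proof. by move=> H; elim: p x => [|y p IH] x //= Qx /andP[r1 r2]; apply: IH (H _ _ Qx r1) r2. Qed.

End Graph.
Set Implicit Arguments. Unset Strict Implicit. Unset Printing Implicit Defensive.

Section Gadget.
Variables (V E : finType) (ends : E -> V * V) (s t : V).
Hypothesis st : s != t.

Definition DN : finType := ((V * bool) + (E * bool))%type.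
Definition DA : finType := ((V * bool) + (E * 'I_5))%type.

Definition Dsrc (a : DA) : DN := match a with
 | inl (v, _) => inl (v, false)
 | inr (e, j) => match val j with
     | 0 => inl ((ends e).1, true) | 1 => inl ((ends e).2, true)
     | 2 => inr (e, false) | _ => inr (e, true) end end.
Definition Ddst (a : DA) : DN := match a with
 | inl (v, _) => inl (v, true)
 | inr (e, j) => match val j with
     | 0 => inr (e, false) | 1 => inr (e, false)
     | 2 => inr (e, true) | 3 => inl ((ends e).1, false) | _ => inl ((ends e).2, false) end end.

Definition s0 : DN := inl (s, true).
Definition t0 : DN := inl (t, false).

Section Extract.
Variable W : seq DA.

Definition Ew := [set e | [exists j : 'I_5, (val j == 2) && (inr (e, j) \in W)]].
Definition Nw := [set v | [|| v == s, v == t, inl (v, false) \in W | inl (v, true) \in W]].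
Definition okH (z : E * bool) := [&& z.1 \in Ew, (ends z.1).1 \in Nw & (ends z.1).2 \in Nw].
Definition hr : rel V := fun x y => [exists z, [&& okH z, tlH ends z == x & hdH ends z == y]].

Lemma reachNw x : connect hr s x -> x \in Nw.
Proof.
apply: (connect_closed (Q := fun x => x \in Nw)); last by rewrite inE eqxx.
move=> u w _ /existsP[z /and3P[/and3P[_ h1 h2] _ /eqP <-]].
by rewrite /hdH; case: (z.2).
Qed.

Lemma hr_joins e x y : e \in Ew -> x \in Nw -> y \in Nw -> joins ends e x y -> hr x y.
Proof.
move=> eE xN yN /orP[] /eqP He; apply/existsP.
- by exists (e, true); rewrite /okH /tlH /hdH /= He eE xN yN !eqxx.
- by exists (e, false); rewrite /okH /tlH /hdH /= He eE xN yN !eqxx.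
Qed.

Definition QD (x : DN) : Prop := match x with
 | inl (v, true) => connect hr s v
 | inl (v, false) => connect hr s v \/ exists x e, [/\ connect hr s x, e \in Ew & joins ends e x v]
 | inr (e, false) => connect hr s (ends e).1 \/ connect hr s (ends e).2
 | inr (e, true) => (connect hr s (ends e).1 \/ connect hr s (ends e).2) /\ e \in Ew
 end.

Lemma extract : walk Ddst Dsrc s0 t0 W ->
  exists vs es, [/\ is_st_path ends s t vs es, {subset es <= Ew} & {subset vs <= Nw}].
Proof.
move=> WW.
have Ht : connect hr s t.
  have : QD t0.
    apply: (walk_inv WW); first exact: connect0.
    case=> [[v c]|[e [[|[|[|[|[|j]]]]] Hj]]] aW //=.
    - move=> [H|[x [e [Hx He Hj]]]]; first done.
      have xN := reachNw Hx; apply: connect_trans Hx (connect1 _); apply: hr_joins He xN _ Hj.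
      by rewrite inE; case: c aW => ->; rewrite !orbT.
    - by left.
    - by right.
    - move=> H; split=> //; rewrite inE; apply/existsP; exists (Ordinal Hj); by rewrite aW.
    - case=> [[H|H] He]; first by left.
      right; exists (ends e).2, e; split=> //; by rewrite /joins -surjective_pairing eqxx orbT.
    - case=> [[H|H] He]; last by left.
      right; exists (ends e).1, e; split=> //; by rewrite /joins -surjective_pairing eqxx.
  rewrite /t0 /=; move=> [H|[x [e [Hx He Hj]]]]; first done.
  have xN := reachNw Hx; apply: connect_trans Hx (connect1 _); apply: hr_joins He xN _ Hj.
  by rewrite inE eqxx orbT.
have [ws [Wh Ok]] := connect_walk (hd := hdH ends) (tl := tlH ends) (ok := okH) Ht.
exists (s :: map (hdH ends) ws), (map fst ws); split.
- exact: walk_st_path.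
- move=> e /mapP[z zw ->]; by have /and3P[] := allP Ok z zw.
- move=> v; rewrite inE => /orP[/eqP ->|]; first by rewrite inE eqxx.
  move=> /mapP[z zw ->]; have /and3P[_ h1 h2] := allP Ok z zw.
  by rewrite /hdH; case: (z.2).
Qed.

End Extract.

End Gadget.
Set Implicit Arguments. Unset Strict Implicit. Unset Printing Implicit Defensive.

Lemma pigeon (I E : finType) (F : {set E}) (S : I -> pred E) :
  (forall i, exists e, e \in F /\ S i e) -> (forall i j e, S i e -> S j e -> i = j) ->
  #|I| <= #|F|.
Proof.
move=> H D; case: (pickP (fun _ : I => true)) => [i0 _|I0]; last first.
  suff -> : #|I| = 0 by [].
  by apply: eq_card0 => x; have := I0 x.
have [e0 _] := H i0.
pose g i := odflt e0 [pick e in F | S i e].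
have gP i : g i \in F /\ S i (g i).
  rewrite /g; case: pickP => [e /andP[]|] //=.
  by have [e [eF Se]] := H i => /(_ e); rewrite eF Se.
have ginj : injective g by move=> i j Eg; apply: (D i j (g i)); [exact: (gP i).2 | rewrite Eg; exact: (gP j).2].
rewrite -cardsT -(card_imset _ ginj); apply: subset_leq_card.
by apply/subsetP => _ /imsetP[i _ ->]; exact: (gP i).1.
Qed.

Section Lift.
Variables (V E : finType) (ends : E -> V * V) (s t : V).
Hypothesis st : s != t.

Notation Dsrc := (Dsrc ends).
Notation Ddst := (Ddst ends).
Notation s0 := (@s0 V E s).
Notation t0 := (@t0 V E t).

Lemma avoid_step (X : {set DA V E}) u a : a \notin X ->
  connect (avoid Dsrc Ddst X) u (Dsrc a) -> connect (avoid Dsrc Ddst X) u (Ddst a).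
Proof.
move=> aX H; apply: connect_trans H (connect1 _).
by apply/existsP; exists a; rewrite aX !eqxx.
Qed.

Definition isl (a : DA V E) := if a is inl _ then true else false.

Lemma cut_lift l : (forall C : {set V}, s \notin C -> t \notin C -> #|C| < l ->
      lambda_ge ends C s t (2 * (l - #|C|))) ->
  forall X : {set DA V E}, #|X| < 2 * l -> connect (avoid Dsrc Ddst X) s0 t0.
Proof.
move=> Hyp X HX.
set C := [set v | [&& v != s, v != t, inl (v, false) \in X & inl (v, true) \in X]].
set F := [set e | [exists j, inr (e, j) \in X]].
set B := [set a | isl a].
have HC : 2 * #|C| <= #|X :&: B|.
  have inj : injective (fun vc : V * bool => (inl vc : DA V E)) by move=> ? ? [].
  have -> : 2 = #|[set: bool]| by rewrite cardsT card_bool.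
  rewrite mulnC -cardsX -(card_imset _ inj); apply: subset_leq_card.
  apply/subsetP => _ /imsetP[[v c] /setXP[vC _] ->]; rewrite in_setI [_ \in B]inE andbT.
  by move: vC; rewrite inE => /and4P[_ _ h1 h2]; case: c.
have HF : #|F| <= #|X :\: B|.
  pose h e : DA V E := inr (e, odflt ord0 [pick j | inr (e, j) \in X]).
  have inj : injective h by move=> e1 e2 [].
  rewrite -(card_imset _ inj); apply: subset_leq_card.
  apply/subsetP => _ /imsetP[e eF ->]; rewrite !inE /=.
  move: eF; rewrite inE => /existsP[j jX]; rewrite /h; case: pickP => [j' -> //|].
  by move=> /(_ j); rewrite jX.
have HXB := cardsID B X.
have Cl : #|C| < l by lia.
have [P [HP1 HP2]] : lambda_ge ends C s t (2 * (l - #|C|)).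
  apply: Hyp; [by rewrite inE eqxx | by rewrite inE eqxx /= andbF | exact: Cl].
have [i Hi] : exists i, all (fun e => e \notin F) (P i).2.
  case: (boolP [exists i, all (fun e => e \notin F) (P i).2]) => [/existsP //|/existsPn H].
  exfalso.
  have : 2 * (l - #|C|) <= #|F|.
    rewrite -[X in X <= _]card_ord.
    apply: (pigeon (S := fun i e => e \in (P i).2)).
      move=> i; have := H i; rewrite -has_predC => /hasP[e e1 e2].
      by exists e; move: e2; rewrite /= negbK.
    move=> i j e ei ej; apply/eqP; apply/negP => /negP ij.
    by have := HP2 i j ij e ei; rewrite ej.
  lia.
have [[Hsz Hu Hh Hl Hz] HC2] := HP1 i.
have Pst : is_st_path ends s t (P i).1 (P i).2 by [].
have [p [Ep Hp]] := st_path_rel Pst.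
move: Hu Hl HC2; rewrite Ep /= => Hu Hl /andP[_ HC2].
have Hp' := path_strengthen Hp Hu Hl HC2.
pose Q y := (y == s) \/ (connect (avoid Dsrc Ddst X) s0 (inl (y, false)) /\ y \notin C).
have : Q (last s p).
  apply: (path_closed (Q := Q)) Hp'; last by left.
  move=> a b Qa /and3P[atn /existsP[e /andP[ein J]] bC]; right; split => //.
  have aout : connect (avoid Dsrc Ddst X) s0 (inl (a, true)).
    case: (eqVneq a s) => [->|asn]; first exact: connect0.
    case: Qa => [as1|[ain aC]]; first by rewrite as1 in asn.
    move: aC; rewrite inE asn atn /= negb_and => aC.
    case hx: (inl (a, false) \in X); move: aC; rewrite hx /= => aC.
    - by apply: (avoid_step (a := inl (a, true))).
    - by apply: (avoid_step (a := inl (a, false))) => //; rewrite hx.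
  have ej j : inr (e, j) \notin X.
    have := allP Hi e ein; rewrite inE => /existsPn /(_ j) //.
  move: J => /orP[/eqP He|/eqP He].
  - have -> : b = (ends e).2 by rewrite He.
    apply: (avoid_step (a := inr (e, @Ordinal 5 4 isT))) (ej _) _ => /=.
    apply: (avoid_step (a := inr (e, @Ordinal 5 2 isT))) (ej _) _ => /=.
    apply: (avoid_step (a := inr (e, @Ordinal 5 0 isT))) (ej _) _ => /=.
    by rewrite He.
  - have -> : b = (ends e).1 by rewrite He.
    apply: (avoid_step (a := inr (e, @Ordinal 5 3 isT))) (ej _) _ => /=.
    apply: (avoid_step (a := inr (e, @Ordinal 5 2 isT))) (ej _) _ => /=.
    apply: (avoid_step (a := inr (e, @Ordinal 5 1 isT))) (ej _) _ => /=.
    by rewrite He.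
rewrite Hl => -[/eqP ts|[]//].
by move: st; rewrite ts eqxx.
Qed.

End Lift.
Set Implicit Arguments. Unset Strict Implicit. Unset Printing Implicit Defensive.

Lemma count_le1_nth (T : eqType) (p : pred T) (x0 : T) (ss : seq T) i j :
  count p ss <= 1 -> i < size ss -> j < size ss -> p (nth x0 ss i) -> p (nth x0 ss j) -> i = j.
Proof.
elim: ss i j => [|x ss IH] [|i] [|j] //= C Hi Hj Pi Pj.
- have : 0 < count p ss by rewrite -has_count; apply/hasP; exists (nth x0 ss j) => //; exact: mem_nth.
  by move: C; rewrite Pi /=; lia.
- have : 0 < count p ss by rewrite -has_count; apply/hasP; exists (nth x0 ss i) => //; exact: mem_nth.
  by move: C; rewrite Pj /=; lia.
- by rewrite (IH i j) //; move: C; case: (p x) => //= ; lia.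
Qed.

Section Main.
Variables (V E : finType) (ends : E -> V * V) (s t : V) (l : nat).
Hypothesis st : s != t.

Lemma dir1 : (forall C : {set V}, s \notin C -> t \notin C -> #|C| < l ->
      lambda_ge ends C s t (2 * (l - #|C|))) ->
   exists P : 'I_(2 * l) -> seq V * seq E,
      edp_family ends s t set0 (2 * l) P /\
      (forall v : V, v != s -> v != t -> #|[set i | v \in (P i).1]| <= 2).
Proof.
move=> Hyp.
have st0 : s0 E s != t0 E t by apply/eqP; rewrite /s0 /t0 => -[].
have [F HF] := maxflow st0 (cut_lift st Hyp).
have [Ws [Hsz HW Hc]] := decomp st0 HF.
pose W (i : 'I_(2 * l)) := nth [::] Ws i.
have Wi i : W i \in Ws by apply: mem_nth; rewrite Hsz.
have uniqW (a : DA V E) i j : a \in W i -> a \in W j -> i = j.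
  move=> ai aj; apply: ord_inj.
  by apply: (@count_le1_nth _ (fun W : seq (DA V E) => a \in W) [::] Ws i j (Hc a)); rewrite ?Hsz.
have [P HP] : exists P : 'I_(2 * l) -> seq V * seq E, forall i,
    [/\ is_st_path ends s t (P i).1 (P i).2, {subset (P i).2 <= Ew (W i)} &
        {subset (P i).1 <= Nw s t (W i)}].
  apply: (fin_all_exists (P := fun i (p : seq V * seq E) => [/\ is_st_path ends s t p.1 p.2,
        {subset p.2 <= Ew (W i)} & {subset p.1 <= Nw s t (W i)}])) => i.
  have [vs [es [H1 H2 H3]]] := extract (HW _ (Wi i)).1.
  by exists (vs, es).
exists P; split; first split.
- by move=> i; have [H1 _ _] := HP i; split => //; apply/allP => v _; rewrite inE.
- move=> i j ij e ei; apply/negP => ej.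
  have [_ H2 _] := HP i; have [_ H2' _] := HP j.
  move: (H2 _ ei) (H2' _ ej); rewrite !inE => /existsP[k /andP[k2 ki]] /existsP[k' /andP[k2' kj]].
  have kk : k = k' by apply: val_inj; rewrite (eqP k2) (eqP k2').
  by move: ki ij; rewrite kk => ki; rewrite (uniqW _ i j ki kj) eqxx.
- move=> v vs vt.
  pose S c := [set i | inl (v, c) \in W i].
  have S1 c : #|S c| <= 1.
    apply/card_le1_eqP => i j; rewrite !inE => hi hj; exact: uniqW hj hi.
  apply: (@leq_trans (#|S false :|: S true|)).
    apply: subset_leq_card; apply/subsetP => i; rewrite !inE => vi.
    have [_ _ H3] := HP i; move: (H3 _ vi); rewrite inE (negbTE vs) (negbTE vt) /=.
    by [].
  by rewrite cardsU; have := S1 false; have := S1 true; lia.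
Qed.

End Main.

Section Main2.
Variables (V E : finType) (ends : E -> V * V) (s t : V) (l : nat).

Lemma dir2 (P : 'I_(2 * l) -> seq V * seq E) :
  edp_family ends s t set0 (2 * l) P ->
  (forall v : V, v != s -> v != t -> #|[set i | v \in (P i).1]| <= 2) ->
  forall C : {set V}, s \notin C -> t \notin C -> #|C| < l ->
      lambda_ge ends C s t (2 * (l - #|C|)).
Proof.
move=> [HP1 HP2] Hn C sC tC Cl.
set I := [set i | all (fun v => v \notin C) (P i).1].
have HI : #|~: I| <= 2 * #|C|.
  rewrite -sum_ind_card.
  apply: (@leq_trans (\sum_i \sum_(v in C) (v \in (P i).1))).
    apply: leq_sum => i _; rewrite !inE.
    case: (boolP (all (fun v => v \notin C) (P i).1)) => //.
    rewrite -has_predC => /hasP[v vP /= /negPn vC].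
    by rewrite (bigD1 v) //= vP.
  rewrite exchange_big /=.
  apply: (@leq_trans (\sum_(v in C) 2)); last by rewrite sum_nat_const mulnC.
  apply: leq_sum => v vC.
  have -> : \sum_i (v \in (P i).1) = #|[set i | v \in (P i).1]|.
    by rewrite -sum_ind_card; apply: eq_bigr => i _; rewrite inE.
  apply: Hn; apply: contraNneq sC; [move=> <- // | move=> vt]. 
  by move: tC; rewrite -vt vC.
have hk : 2 * (l - #|C|) <= #|I|.
  have := cardsC I; rewrite card_ord; lia.
pose f (j : 'I_(2 * (l - #|C|))) := @enum_val _ (mem I) (widen_ord hk j).
have finj : injective f.
  by move=> j j' /enum_val_inj /(congr1 val) /= /val_inj.
have fI j : f j \in I by exact: enum_valP.
exists (fun j => P (f j)); split.
- move=> j; have [H1 _] := HP1 (f j); split => //.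
  by have := fI j; rewrite inE.
- move=> j j' jj e ej; apply: HP2 => //.
  exact: (contra_neq (@finj j j') jj). exact: ej.
Qed.

End Main2.

Theorem corollary3 (V E : finType) (ends : E -> V * V) (s t : V) (l : nat) :
  s != t -> 0 < l ->
  ((forall C : {set V}, s \notin C -> t \notin C -> #|C| < l ->
      lambda_ge ends C s t (2 * (l - #|C|)))
   <->
   (exists P : 'I_(2 * l) -> seq V * seq E,
      edp_family ends s t set0 (2 * l) P /\
      (forall v : V, v != s -> v != t -> #|[set i | v \in (P i).1]| <= 2))).
Proof.
move=> st _; split; first exact: dir1.
by move=> [P [HP Hn]]; exact: dir2 HP Hn.
Qed.
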